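(* Consider the market and VCG mechanism described in the context, and let $\gamma>0$ be a weak-supermodularity constant of the market objective. Let $K\subseteq L$ and consider the profile $\mathcal{C}=\{c_l\}_{l\in L}$, where for $l\in K$ the function $c_l:\mathcal{X}_l\to\mathbb{R}_+$ is the true cost of bidder $l$ and for $l\notin K$ the function $c_l$ is an arbitrary fixed bid of bidder $l$ (not necessarily truthful). Assume the bidders in $K$ lose under $\mathcal{C}$, i.e. $x^*_l(\mathcal{C})=0$ for all $l\in K$. Let $\mathcal{B}_K=\{b_l\}_{l\in K}$ be any joint deviation, with each $b_l:\mathcal{X}_l\to\mathbb{R}_+$, $b_l(0)=0$, and let $\mathcal{B}=(\mathcal{C}_{-K},\mathcal{B}_K)$. Then $$\sum_{l\in K}u_l(\mathcal{B})\;\le\;\big[\gamma^{-1}-1\big]\big[J(\mathcal{C})-J(\mathcal{B})\big]\;\le\;\big[\gamma^{-1}-1\big]\big[J(\mathcal{C})-J(\mathcal{C}_{-K},\mathcal{B}^0_K)\big],$$ where $\mathcal{B}^0_K$ is the profile in which each $l\in K$ bids $b_l(x_l)=0$ for all $x_l\in\mathcal{X}_l$. (Since $u_l(\mathcal{C})=0$ for the losing bidders $l\in K$, this bounds the collective profit of the colluders $K$ from the deviation.)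
   Context: Market model. $L=\{1,\dots,|L|\}$ is a finite set of bidders and $t\ge1$ the number of types of supply. Bidder $l$ submits a bid function $b_l:\hat{\mathcal X}_l\to\mathbb{R}_+$ with $0\in\hat{\mathcal X}_l\subseteq\mathbb{R}^t_+$, $b_l(0)=0$; a bid profile is $\mathcal{B}=\{b_l\}_{l\in L}$. Fixed functions $d:\mathbb{R}^{t|L|}_+\times\mathbb{R}^p\to\mathbb{R}$ and $g:\mathbb{R}^{t|L|}_+\times\mathbb{R}^p\to\mathbb{R}^q$ are given. For $S\subseteq L$, $$J(\mathcal{B}_S)=\min\Big\{\sum_{l\in S}b_l(x_l)+d(x,y):\ x\in\textstyle\prod_{l\in L}\hat{\mathcal X}_l,\ y\in\mathbb{R}^p,\ g(x,y)\le0,\ x_l=0\ \forall l\notin S\Big\},$$ with value $+\infty$ if infeasible (minima are assumed attained when finite). Write $J(\mathcal{B})=J(\mathcal{B}_L)$ and $J(\mathcal{B}_{-K})=J(\mathcal{B}_{L\setminus K})$, $J(\mathcal{B}_{-l})=J(\mathcal{B}_{L\setminus\{l\}})$. $(x^*(\mathcal{B}),y^*(\mathcal{B}))$ denotes the minimizer for $S=L$ selected by a fixed tie-breaking rule. A mixed profile $(\mathcal{C}_{-K},\mathcal{B}_K)$ means bidders in $K$ use the functions in $\mathcal{B}_K$ and the others use those in $\mathcal{C}$. Standing assumption: for every profile considered, $J(\mathcal{B})<\infty$ and $J(\mathcal{B}_{-l})<\infty$ for every $l$. VCG mechanism (Clarke pivot): the payment to bidder $l$ is $p_l(\mathcal{B})=b_l(x^*_l(\mathcal{B}))+J(\mathcal{B}_{-l})-J(\mathcal{B})$,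 and the utility of bidder $l$ with true cost $c_l$ is $u_l(\mathcal{B})=p_l(\mathcal{B})-c_l(x^*_l(\mathcal{B}))$. Weak-supermodularity constant: $\gamma>0$ is such that for every bid profile $\mathcal{B}$ and all $K,S\subseteq L$ with $J(\mathcal{B}_{S\setminus K})<\infty$, $$\gamma\sum_{l\in K}\big[J(\mathcal{B}_{S\setminus\{l\}})-J(\mathcal{B}_S)\big]\le J(\mathcal{B}_{S\setminus K})-J(\mathcal{B}_S).$$ (The largest such $\gamma$ is the supermodularity ratio $\gamma_{\sup}$; the market objective is weakly supermodular if $\gamma_{\sup}>0$.) *)

(* Defs.v *)
From mathcomp Require Import all_boot.
From Stdlib Require Import Reals ClassicalEpsilon.
Set Implicit Arguments.
Unset Strict Implicit.
Unset Printing Implicit Defensive.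
Local Open Scope R_scope.

Definition vec (k : nat) := 'I_k -> R.
Definition zerov (k : nat) : vec k := fun _ => 0.
Arguments zerov k _ : clear implicits.

(* A bid profile for bidders L = 'I_n : bidder l bids the function b l on R^t
   (only its values on the offered set X l matter). *)
Definition profile (n t : nat) := 'I_n -> vec t -> R.

Definition valid_bid (t : nat) (Xl : vec t -> Prop) (b : vec t -> R) : Prop :=
  b (zerov t) = 0 /\ (forall z, Xl z -> 0 <= b z).

Definition valid_profile (n t : nat) (X : 'I_n -> vec t -> Prop)
  (P : profile n t) : Prop := forall l, valid_bid (X l) (P l).

Definition mix (n t : nat) (K : {set 'I_n}) (C B : profile n t) : profile n t :=
  fun l => if l \in K then B l else C l.

Definition zero_profile (n t : nat) : profile n t := fun _ _ => 0.
Arguments zero_profile n t _ _ : clear implicits.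

Section Market.
Variables (n t p q : nat) (X : 'I_n -> vec t -> Prop)
  (d : ('I_n -> vec t) -> vec p -> R)
  (g : ('I_n -> vec t) -> vec p -> vec q).

Definition feasible (S : {set 'I_n}) (x : 'I_n -> vec t) (y : vec p) : Prop :=
  (forall l, X l (x l)) /\ (forall i, g x y i <= 0) /\
  (forall l, l \notin S -> x l = zerov t).

Definition objective (P : profile n t) (S : {set 'I_n})
  (x : 'I_n -> vec t) (y : vec p) : R :=
  \big[Rplus/0]_(l in S) P l (x l) + d x y.

Definition is_minimizer (P : profile n t) (S : {set 'I_n})
  (xy : ('I_n -> vec t) * vec p) : Prop :=
  feasible S xy.1 xy.2 /\
  forall x' y', feasible S x' y' -> objective P S xy.1 xy.2 <= objective P S x' y'.

(* J(B_S): Some (minimum value) when the minimum is attained, None (= +oo)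
   otherwise. *)
Definition Jopt (P : profile n t) (S : {set 'I_n}) : option R :=
  match excluded_middle_informative (exists xy, is_minimizer P S xy) with
  | left H => let xy := proj1_sig (constructive_indefinite_description _ H) in
              Some (objective P S xy.1 xy.2)
  | right _ => None
  end.

Definition Jfinite (P : profile n t) (S : {set 'I_n}) : Prop := Jopt P S <> None.

(* Real value of J (meaningful only when Jfinite holds). *)
Definition J (P : profile n t) (S : {set 'I_n}) : R :=
  match Jopt P S with Some v => v | None => 0 end.

Definition minima_attained (P : profile n t) : Prop :=
  forall S, (exists x y, feasible S x y) ->
  (exists m, forall x y, feasible S x y -> m <= objective P S x y) ->
  Jfinite P S.

Definition standing (P : profile n t) : Prop :=
  Jfinite P setT /\ forall l, Jfinite P (setT :\ l).

Definition tie_breaking (xstar : profile n t -> ('I_n -> vec t) * vec p) : Prop :=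
  forall P, valid_profile X P -> Jfinite P setT -> is_minimizer P setT (xstar P).

Definition weak_supermodular (gamma : R) : Prop :=
  forall P, valid_profile X P -> forall S K : {set 'I_n},
    Jfinite P (S :\: K) -> Jfinite P S -> (forall l, l \in K -> Jfinite P (S :\ l)) ->
    gamma * \big[Rplus/0]_(l in K) (J P (S :\ l) - J P S) <= J P (S :\: K) - J P S.

Definition payment (xstar : profile n t -> ('I_n -> vec t) * vec p)
  (P : profile n t) (l : 'I_n) : R :=
  P l ((xstar P).1 l) + J P (setT :\ l) - J P setT.

Definition utility (xstar : profile n t -> ('I_n -> vec t) * vec p)
  (c : vec t -> R) (P : profile n t) (l : 'I_n) : R :=
  payment xstar P l - c ((xstar P).1 l).

End Market.

(* Main.v *)
Require Import Defs.
From HB Require Import structures.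
From mathcomp Require Import all_boot.
From Stdlib Require Import Reals Lra ClassicalEpsilon.
Set Implicit Arguments.
Local Open Scope R_scope.

HB.instance Definition _ := Monoid.isComLaw.Build R 0 Rplus (fun a b c => esym (Rplus_assoc a b c)) Rplus_comm Rplus_0_l.

Section Aux.
Variables (n t p q : nat) (X : 'I_n -> vec t -> Prop)
  (d : ('I_n -> vec t) -> vec p -> R)
  (g : ('I_n -> vec t) -> vec p -> vec q).

Lemma J_spec (P : profile n t) (S : {set 'I_n}) : Jfinite X d g P S ->
  exists xy, is_minimizer X d g P S xy /\ J X d g P S = objective d P S xy.1 xy.2.
Proof.
rewrite /Jfinite /J /Jopt.
case: excluded_middle_informative => [H|H] // _.
set xy := proj1_sig _.
exists xy; split => //.
exact: (proj2_sig (constructive_indefinite_description _ H)).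
Qed.

Lemma J_le (P : profile n t) (S : {set 'I_n}) x y : Jfinite X d g P S -> feasible X g S x y ->
  J X d g P S <= objective d P S x y.
Proof.
move=> /J_spec [xy [[_ Hm] ->]] Hf; exact: Hm.
Qed.

Lemma obj_setT (P : profile n t) (S : {set 'I_n}) x y : valid_profile X P ->
  (forall l, l \notin S -> x l = zerov t) ->
  objective d P S x y = objective d P setT x y.
Proof.
move=> HP Hz; rewrite /objective; congr (_ + _).
rewrite big_mkcond [in RHS]big_mkcond; apply: eq_bigr => l _.
rewrite in_setT; case: ifP => // /negbT /Hz ->.
by case: (HP l).
Qed.

Lemma obj_ext (P P' : profile n t) x y : (forall l, P l (x l) = P' l (x l)) ->
  objective d P setT x y = objective d P' setT x y.
Proof.
move=> H; rewrite /objective; congr (_ + _); apply: eq_bigr => l _; exact: H.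
Qed.

Lemma feas_sub (S S' : {set 'I_n}) x y : S' \subset S -> feasible X g S' x y -> feasible X g S x y.
Proof.
move=> sub [H1 [H2 H3]]; split => //; split => // l lS.
apply: H3; apply/negP => lS'; move/negP: lS; apply; exact: (subsetP sub).
Qed.

Lemma J_mono (P : profile n t) (S S' : {set 'I_n}) : valid_profile X P -> S' \subset S ->
  Jfinite X d g P S -> Jfinite X d g P S' -> J X d g P S <= J X d g P S'.
Proof.
move=> HP sub fS fS'.
have [[x y] [[Hf Hm] ->]] := J_spec fS'.
apply: Rle_trans (J_le fS (feas_sub sub Hf)) _.
rewrite /= (obj_setT _ _ _ HP); last by case: (feas_sub sub Hf) => _ [_ H].
rewrite (obj_setT _ _ _ HP); last by case: Hf => _ [_ H].
exact: Rle_refl.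
Qed.

End Aux.


Theorem theorem1 (n t p q : nat) (X : 'I_n -> vec t -> Prop)
  (d : ('I_n -> vec t) -> vec p -> R) (g : ('I_n -> vec t) -> vec p -> vec q)
  (xstar : profile n t -> ('I_n -> vec t) * vec p) (gamma : R)
  (K : {set 'I_n}) (C b : profile n t) :
  (forall l, X l (zerov t)) ->
  (forall l z, X l z -> forall i, 0 <= z i) ->
  0 < gamma ->
  weak_supermodular X d g gamma ->
  tie_breaking X d g xstar ->
  valid_profile X C ->
  (forall l, l \in K -> valid_bid (X l) (b l)) ->
  (forall P : profile n t, P = C \/ P = mix K C b \/ P = mix K C (zero_profile n t) ->
     standing X d g P /\ minima_attained X d g P) ->
  (forall l, l \in K -> (xstar C).1 l = zerov t) ->
  \big[Rplus/0]_(l in K) utility X d g xstar (C l) (mix K C b) l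
    <= (/ gamma - 1) * (J X d g C setT - J X d g (mix K C b) setT)
  /\ (/ gamma - 1) * (J X d g C setT - J X d g (mix K C b) setT)
    <= (/ gamma - 1) * (J X d g C setT - J X d g (mix K C (zero_profile n t)) setT).
Proof.
move=> _ _ gpos wsm tb vC vb Hst xCK.
set B := mix K C b.
set B0 := mix K C (zero_profile n t).
have vB : valid_profile X B.
  by move=> l; rewrite /B /mix; case: ifP => [/vb|_]; [|apply: vC].
have vB0 : valid_profile X B0.
  move=> l; rewrite /B0 /mix; case: ifP => _; last by apply: vC.
  by split => // z _; apply: Rle_refl.
have [[fC _] _] := Hst C (or_introl erefl).
have [[fB fBl] maB] := Hst B (or_intror (or_introl erefl)).
have [[fB0 fB0l] maB0] := Hst B0 (or_intror (or_intror erefl)).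
have minC := tb C vC fC.
have generic : forall P : profile n t, valid_profile X P ->
    (forall l, l \notin K -> P l = C l) -> Jfinite X d g P setT ->
    minima_attained X d g P ->
    (forall S : {set 'I_n}, setT :\: K \subset S -> Jfinite X d g P S) /\
    J X d g P (setT :\: K) <= J X d g C setT /\
    J X d g C setT <= J X d g P (setT :\: K).
  move=> P vP PC fP maP.
  have feasC : forall S : {set 'I_n}, setT :\: K \subset S ->
      feasible X g S (xstar C).1 (xstar C).2.
    move=> S sub; case: minC => [[H1 [H2 _]] _]; split => //; split => // l lS.
    apply: xCK; apply: contraNT lS => lK.
    by apply: (subsetP sub); rewrite !inE lK.
  have objCP : forall x y, (forall l, l \in K -> x l = zerov t) ->
      objective d P setT x y = objective d C setT x y.
    move=> x y Hx; apply: obj_ext => l; case: (boolP (l \in K)) => lK.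
      by rewrite Hx //; case: (vP l) => ->; case: (vC l) => ->.
    by rewrite PC.
  have finS : forall S : {set 'I_n}, setT :\: K \subset S -> Jfinite X d g P S.
    move=> S sub; apply: maP; first by exists (xstar C).1, (xstar C).2; apply: feasC.
    exists (J X d g P setT) => x y Hf.
    rewrite (obj_setT d _ _ _ vP); last by case: Hf => _ [_ H].
    apply: J_le => //; apply: (feas_sub (subsetT S) Hf).
  split => //; split.
  - apply: Rle_trans (J_le (finS _ (subxx _)) (feasC _ (subxx _))) _.
    rewrite (obj_setT d _ _ _ vP); last first.
      by move=> l; rewrite !inE andbT negbK => /xCK.
    rewrite objCP //.
    have [[x y] [[Hf _] ->]] := J_spec fC.
    case: minC => [_ Hm]; exact: (Hm _ _ Hf).
  - have [[x y] [[Hf _] ->]] := J_spec (finS _ (subxx _)).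
    have xK : forall l, l \in K -> x l = zerov t.
      by move=> l lK; case: Hf => _ [_ H]; apply: H; rewrite !inE lK.
    rewrite /= (obj_setT d _ _ _ vP); last by case: Hf => _ [_ H].
    rewrite objCP //; apply: J_le => //; exact: (feas_sub (subsetT _) Hf).
have BC : forall l, l \notin K -> B l = C l by move=> l /negbTE; rewrite /B /mix => ->.
have B0C : forall l, l \notin K -> B0 l = C l by move=> l /negbTE; rewrite /B0 /mix => ->.
have [finB [JBK _]] := generic B vB BC fB maB.
have [finB0 [_ JB0K]] := generic B0 vB0 B0C fB0 maB0.
have minB := tb B vB fB.
have B0B : J X d g B0 setT <= J X d g B setT.
  have [[x y] [[Hf _] ->]] := J_spec fB.
  apply: Rle_trans (J_le fB0 Hf) _.
  rewrite /objective; apply: Rplus_le_compat_r.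
  apply: (big_ind2 (fun a b => a <= b)); [exact: Rle_refl | by move=> *; apply: Rplus_le_compat|].
  move=> l _; rewrite /B0 /B /mix; case: ifP => lK; last exact: Rle_refl.
  case: (vb l lK) => _; apply; by case: Hf => H _; apply: H.
set x := (xstar B).1.
set y := (xstar B).2.
have [fxB HmB] := minB.
have JBx : J X d g B setT = objective d B setT x y.
  apply: Rle_antisym; first exact: J_le fB fxB.
  have [[x' y'] [[Hf' _] ->]] := J_spec fB.
  exact: (HmB _ _ Hf').
have JCx : J X d g C setT <= objective d C setT x y by apply: J_le.
have sumdiff : \big[Rplus/0]_(l in setT) B l (x l) =
    \big[Rplus/0]_(l in setT) C l (x l) + \big[Rplus/0]_(l in K) (B l (x l) - C l (x l)).
  rewrite big_mkcond [X in _ = X + _]big_mkcond [X in _ = _ + X]big_mkcond -big_split /=.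
  apply: eq_bigr => l _; rewrite in_setT; case: (boolP (l \in K)) => lK.
    lra.
  rewrite BC //; lra.
have objdiff : objective d B setT x y - objective d C setT x y =
    \big[Rplus/0]_(l in K) (B l (x l) - C l (x l)).
  rewrite /objective sumdiff.
  set A := \big[Rplus/0]_(l in setT) C l (x l).
  set s := \big[Rplus/0]_(l in K) _.
  lra.
have JBmono : J X d g B setT <= J X d g B (setT :\: K).
  exact: (J_mono vB (subsetT _) fB (finB _ (subxx _))).
set M := \big[Rplus/0]_(l in K) (J X d g B (setT :\ l) - J X d g B setT).
have wsmB : gamma * M <= J X d g B (setT :\: K) - J X d g B setT :=
  wsm B vB setT K (finB _ (subxx _)) fB (fun l _ => fBl l).
have HM : M <= / gamma * (J X d g C setT - J X d g B setT).
  apply: (Rmult_le_reg_l gamma) => //.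
  rewrite -Rmult_assoc Rinv_r; last lra.
  rewrite Rmult_1_l; lra.
have usum : \big[Rplus/0]_(l in K) utility X d g xstar (C l) B l =
    M + \big[Rplus/0]_(l in K) (B l (x l) - C l (x l)).
  rewrite /M -big_split /=; apply: eq_bigr => l _.
  rewrite /utility /payment -/x.
  have Hlin : forall a b c e : R, a + b - c - e = b - c + (a - e) by move=> *; ring.
  exact: Hlin.
split.
  rewrite usum -objdiff JBx.
  rewrite -JBx in JCx |- *.
  have : (/ gamma - 1) * (J X d g C setT - J X d g B setT) =
     / gamma * (J X d g C setT - J X d g B setT) - (J X d g C setT - J X d g B setT) by ring.
  lra.
case: (Rle_lt_dec gamma 1) => hg.
  apply: Rmult_le_compat_l; last lra.
  have : 1 <= / gamma.
    rewrite -Rinv_1; apply: Rinv_le_contravar => //.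
  lra.
have chain : forall m (K' : {set 'I_n}), #|K'| = m -> K' \subset K ->
    J X d g B0 (setT :\: K') = J X d g B0 setT.
  elim => [|m IH] K' cK' sK'.
    by move/eqP: cK'; rewrite cards_eq0 => /eqP ->; rewrite setD0.
  have : leq 1 #|K'| by rewrite cK'.
  case/card_gt0P => a aK'.
  set K'' := K' :\ a.
  have cK'' : #|K''| = m.
    by move: cK'; rewrite (cardsD1 a K') aK' add1n => -[].
  have sK'' : K'' \subset K by apply: subset_trans (subD1set _ _) sK'.
  have eqS : setT :\: K' = (setT :\: K'') :\ a.
    apply/setP => z; rewrite !inE andbT; case: (eqVneq z a) => [->|za] /=.
      by rewrite aK'.
    by rewrite andbT.
  rewrite eqS -(IH K'' cK'' sK'').
  set S := setT :\: K''.
  have fS : Jfinite X d g B0 S by apply: finB0; apply: setDS.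
  have fSa : Jfinite X d g B0 (S :\ a) by rewrite -eqS; apply: finB0; apply: setDS.
  have w := wsm B0 vB0 S [set a] fSa fS (fun l la => ltac:(move/set1P: la => ->; exact: fSa)).
  rewrite big_set1 in w.
  have mono : J X d g B0 S <= J X d g B0 (S :\ a) by apply: J_mono => //; apply: subD1set.
  nra.
have e1 := chain _ K erefl (subxx K).
have JBmono' : J X d g B setT <= J X d g B (setT :\: K).
  exact: JBmono.
have eqB : J X d g B setT = J X d g B0 setT by lra.
rewrite eqB; exact: Rle_refl.
Qed.
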